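(* Let $S$ be a finite GCD closed set of positive integers. If the element $x_i\in S$ generates a double-chain set in $S$, then $\Psi_{S,\frac1N}(x_i)\neq 0$.
   Context: All order notions are with respect to divisibility on the positive integers, where the meet is $\gcd$; $S$ is GCD closed if $\gcd(x,y)\in S$ for all $x,y\in S$. $C_S(x)$ is the set of elements of $S$ covered by $x$ in $(S,\mid)$; $\mathrm{meetcl}(C)$ is the set of gcds of all nonempty finite subsets of $C$. An element $x\in S$ generates a double-chain set in $S$ if $\mathrm{meetcl}(C_S(x))\setminus C_S(x)$ is a union of two disjoint (possibly empty) chains under divisibility. $\mu_S$ is the Möbius function of $(S,\mid)$ and $\Psi_{S,\frac1N}(x_i)=\sum_{x_j\in S,\ x_j\mid x_i}\mu_S(x_j,x_i)/x_j$. *)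

(* Defs.v *)
From HB Require Import structures.
From mathcomp Require Import all_boot all_order all_algebra.
Set Implicit Arguments. Unset Strict Implicit. Unset Printing Implicit Defensive.
Import Order.TTheory GRing.Theory Num.Theory.

(* A finite set S of positive integers is represented by a sequence S : seq nat
   (duplicates, if any, are irrelevant: all sums below range over undup S). *)

Definition gcd_closed (S : seq nat) : Prop :=
  forall x y, x \in S -> y \in S -> gcdn x y \in S.

Definition covered_by (S : seq nat) (y x : nat) : bool :=
  [&& y \in S, x \in S, y %| x, y != x &
   ~~ has (fun z => [&& y %| z, z %| x, z != y & z != x]) S].

Definition covset (S : seq nat) (x : nat) : seq nat :=
  [seq y <- undup S | covered_by S y x].

Definition in_meetcl (C : seq nat) (d : nat) : Prop :=
  exists s : seq nat, [/\ s != [::], all (mem C) s & d = \big[gcdn/0]_(c <- s) c].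

Definition is_chain (A : seq nat) : Prop :=
  forall a b, a \in A -> b \in A -> (a %| b) || (b %| a).

Definition double_chain_gen (S : seq nat) (x : nat) : Prop :=
  exists A B : seq nat,
    [/\ forall d, (in_meetcl (covset S x) d /\ d \notin covset S x) <-> (d \in A \/ d \in B),
        forall d, d \in A -> d \notin B,
        is_chain A & is_chain B].

(* Fuel k; since elements are positive, proper divisors
   are smaller, so fuel x.+1 suffices. *)
Fixpoint mu_rec (S : seq nat) (k : nat) (y x : nat) : int :=
  match k with
  | 0 => 0%R
  | k'.+1 =>
    if y == x then 1%R
    else if y %| x then
      (- \sum_(z <- undup S | (dvdn y z) && (dvdn z x) && (z != x)) mu_rec S k' y z)%R
    else 0%R
  end.

Definition mobius (S : seq nat) (y x : nat) : int := mu_rec S x.+1 y x.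

Definition Psi_inv (S : seq nat) (x : nat) : rat :=
  (\sum_(xj <- undup S | dvdn xj x) ((mobius S xj x)%:~R / xj%:R))%R.

(* Main.v *)
Require Import Defs.
From mathcomp Require Import all_boot all_order all_algebra.
From mathcomp Require Import zify ring lra.
Import Order.TTheory GRing.Theory Num.Theory.
Set Implicit Arguments. Unset Strict Implicit. Unset Printing Implicit Defensive.
Local Open Scope ring_scope.

Fixpoint Q (f : nat -> rat) (y : nat) (cs : seq nat) : rat :=
  match cs with [::] => f y | c :: cs' => Q f y cs' - Q f (gcdn y c) cs' end.
Arguments Q : simpl never.

Lemma QE f y c cs : Q f y (c :: cs) = Q f y cs - Q f (gcdn y c) cs.
Proof. by []. Qed.
Lemma QE0 f y : Q f y [::] = f y.
Proof. by []. Qed.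

Lemma Q_zero f y cs : has (fun c => y %| c)%N cs -> Q f y cs = 0.
Proof.
elim: cs y => [|c cs IH] y //= /orP [Hyc|Hh].
- by rewrite QE (gcdn_idPl Hyc) subrr.
- rewrite QE IH // IH ?subrr //; apply/hasP; case/hasP: Hh => d Hd Hyd.
  by exists d => //; exact: dvdn_trans (dvdn_gcdl y c) Hyd.
Qed.

Lemma Q_swap f y a b cs : Q f y (a :: b :: cs) = Q f y (b :: a :: cs).
Proof. rewrite !QE -!gcdnA (gcdnC a b); ring. Qed.

Lemma Q_move f y s1 a s2 : Q f y (s1 ++ a :: s2) = Q f y (a :: s1 ++ s2).
Proof.
elim: s1 y => [|b s1 IH] y //=.
by rewrite Q_swap QE !IH.
Qed.

Lemma Q_dom f y g rest : all (fun r => r %| g)%N rest -> Q f y (g :: rest) = Q f y [:: g].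
Proof.
elim: rest => [|r rest IH] //= /andP [Hr Hall].
rewrite Q_swap QE (@Q_zero _ (gcdn y r)) ?subr0 ?IH //.
by rewrite /= (dvdn_trans (dvdn_gcdr _ _) Hr).
Qed.

Lemma Q_map f y z cs : (y %| z)%N -> Q f y (map (gcdn z) cs) = Q f y cs.
Proof.
elim: cs y => [|c cs IH] y Hyz //=.
rewrite !QE gcdnA (gcdn_idPl Hyz) IH // IH //.
exact: dvdn_trans (dvdn_gcdl y c) Hyz.
Qed.

Lemma Q_ind z y cs : Q (fun g => (z %| g)%N%:R) y cs = ((z %| y)%N && all (fun c => ~~ (z %| c)%N) cs)%:R.
Proof.
elim: cs y => [|c cs IH] y; first by rewrite QE0 /= andbT.
rewrite QE !IH dvdn_gcd /=.
by case: (z %| y)%N; case: (z %| c)%N; case: (all _ cs); rewrite /= ?subrr ?subr0.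
Qed.

Lemma Q_sum (I : Type) (r : seq I) (F : I -> nat -> rat) y cs :
  Q (fun g => \sum_(i <- r) F i g) y cs = \sum_(i <- r) Q (F i) y cs.
Proof.
elim: cs y => [|c cs IH] y; first by rewrite QE0; apply: eq_bigr => i _; rewrite QE0.
by rewrite QE !IH -sumrB; apply: eq_bigr => i _; rewrite QE.
Qed.

Lemma Q_scale a F y cs : Q (fun g => a * F g) y cs = a * Q F y cs.
Proof. by elim: cs y => [|c cs IH] y; rewrite ?QE0 // !QE !IH mulrBr. Qed.

Lemma Q_ext (s : seq nat) F G y cs : {in s, F =1 G} ->
  (forall a b, a \in s -> b \in s -> gcdn a b \in s) -> y \in s -> all (mem s) cs ->
  Q F y cs = Q G y cs.
Proof.
move=> HFG Hcl; elim: cs y => [|c cs IH] y Hy; first by rewrite !QE0 HFG.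
by case/andP => Hc Hcs; rewrite !QE !IH // Hcl.
Qed.

Definition invn (g : nat) : rat := (g%:R)^-1.

Local Close Scope ring_scope.
Definition dvcomp (u v : nat) := ((u %| v) || (v %| u))%N.

Definition goodC (y : nat) (C : seq nat) :=
 [/\ uniq C, forall c, c \in C -> (0 < c)%N /\ (c %| y)%N,
     forall a b, a \in C -> b \in C -> (a %| b)%N -> a = b &
     forall a b c d e f, a \in C -> b \in C -> c \in C -> d \in C -> e \in C -> f \in C ->
       a != b -> c != d -> e != f ->
       dvcomp (gcdn a b) (gcdn c d) || dvcomp (gcdn a b) (gcdn e f) || dvcomp (gcdn c d) (gcdn e f)].

Lemma goodC_sub y C C' : uniq C' -> {subset C' <= C} -> goodC y C -> goodC y C'.
Proof.
move=> HU Hs [_ H1 H2 H3]; split => //.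
- by move=> c /Hs; apply: H1.
- by move=> a b /Hs Ha /Hs Hb; apply: H2.
- by move=> a b c d e f /Hs ? /Hs ? /Hs ? /Hs ? /Hs ? /Hs ?; apply: H3.
Qed.

Lemma two_elems (C : seq nat) : uniq C -> (1 < size C)%N ->
  exists a b, [/\ a \in C, b \in C & a != b].
Proof.
case: C => [|a [|b C]] //= /andP [Ha _] _.
exists a, b; split; rewrite ?inE ?eqxx ?orbT //.
by rewrite inE negb_or in Ha; case/andP: Ha.
Qed.

Lemma pick y C : (0 < y)%N -> goodC y C -> (1 < size C)%N ->
  exists c c0, [/\ c \in C, c0 \in C, c0 != c &
     forall c1, c1 \in C -> c1 != c -> (gcdn c c1 %| gcdn c c0)%N].
Proof.
move=> Hy [HU H1 H2 H3] Hsz.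
pose P := fun n => has (fun a => has (fun b => (a != b) && (gcdn a b == n)) C) C.
have exP : exists n, P n.
  have [a [b [Ha Hb Hab]]] := two_elems HU Hsz.
  exists (gcdn a b); apply/hasP; exists a => //; apply/hasP; exists b => //.
  by rewrite Hab eqxx.
have ubP : forall n, P n -> (n <= y)%N.
  move=> n /hasP [a Ha /hasP [b Hb /andP [_ /eqP <-]]].
  have [Ha0 Hay] := H1 a Ha.
  apply: leq_trans (dvdn_leq Hy Hay); exact: dvdn_leq Ha0 (dvdn_gcdl _ _).
case: (ex_maxnP exP ubP) => m Pm Hmax.
case/hasP: Pm => c1 Hc1 /hasP [c2 Hc2 /andP [Hne /eqP Hm]].
have gpos : forall a b, a \in C -> (0 < gcdn a b)%N.
  by move=> a b Ha; rewrite gcdn_gt0 (H1 a Ha).1.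
have Pg : forall a b, a \in C -> b \in C -> a != b -> P (gcdn a b).
  move=> a b Ha Hb Hab; apply/hasP; exists a => //; apply/hasP; exists b => //.
  by rewrite Hab eqxx.
case: (boolP (all (fun k => (k != c1) ==> (gcdn c1 k %| gcdn c1 c2)) C)) => [Hall|].
  exists c1, c2; split => //; first by rewrite eq_sym.
  by move=> k Hk Hkne; move/allP: Hall => /(_ k Hk); rewrite Hkne.
case/allPn => k Hk; rewrite negb_imply => /andP [Hk1 Hnk].
case: (boolP (all (fun l => (l != c2) ==> (gcdn c2 l %| gcdn c2 c1)) C)) => [Hall|].
  exists c2, c1; split => //.
  by move=> l Hl Hlne; move/allP: Hall => /(_ l Hl); rewrite Hlne.
case/allPn => l Hl; rewrite negb_imply => /andP [Hl2 Hnl].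
exfalso.
rewrite (gcdnC c2 c1) in Hnl.
have Hk1' : c1 != k by rewrite eq_sym.
have Hl2' : c2 != l by rewrite eq_sym.
have Hle1 : (gcdn c1 k <= m)%N by apply: Hmax; apply: Pg.
have Hle2 : (gcdn c2 l <= m)%N by apply: Hmax; apply: Pg.
have N1 : ~~ (gcdn c1 c2 %| gcdn c1 k).
  apply/negP => Hd; have := dvdn_leq (gpos c1 k Hc1) Hd; rewrite Hm => Hle.
  have E : gcdn c1 k = m by apply/eqP; rewrite eqn_leq Hle1 Hle.
  by move: Hnk; rewrite E -Hm dvdnn.
have N2 : ~~ (gcdn c1 c2 %| gcdn c2 l).
  apply/negP => Hd; have := dvdn_leq (gpos c2 l Hc2) Hd; rewrite Hm => Hle.
  have E : gcdn c2 l = m by apply/eqP; rewrite eqn_leq Hle2 Hle.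
  by move: Hnl; rewrite E -Hm dvdnn.
move/(_ c1 c2 c1 k c2 l Hc1 Hc2 Hc1 Hk Hc2 Hl Hne Hk1' Hl2'): H3.
rewrite /dvcomp (negbTE N1) (negbTE Hnk) (negbTE N2) (negbTE Hnl) /= => /orP [H|H].
- move/negP: Hnk; apply; rewrite dvdn_gcd dvdn_gcdl /=.
  exact: dvdn_trans H (dvdn_gcdl c2 l).
- move/negP: Hnl; apply; rewrite dvdn_gcd dvdn_gcdl andbT.
  exact: dvdn_trans H (dvdn_gcdl c1 k).
Qed.

Lemma mem_split (T : eqType) (x : T) s : x \in s -> exists s1 s2, s = s1 ++ x :: s2.
Proof. by case/splitPr => s1 s2; exists s1, s2. Qed.

Local Open Scope ring_scope.

Lemma finv_lt (a b : nat) : (0 < a)%N -> (a < b)%N -> invn b < invn a.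
Proof.
move=> Ha Hab; have Hb : (0 < b)%N by apply: ltn_trans Hab.
by rewrite /invn ltf_pV2 ?posrE ?ltr0n ?ltr_nat.
Qed.

Lemma finv_gt0 (a : nat) : (0 < a)%N -> 0 < invn a.
Proof. by move=> Ha; rewrite /invn invr_gt0 ltr0n. Qed.

Lemma ineq2 (g c c0 : nat) : (0 < g)%N -> (g %| c)%N -> (g %| c0)%N -> (g < c)%N -> (g < c0)%N ->
  c != c0 -> invn c + invn c0 < invn g.
Proof.
move=> Hg /dvdnP [a ->] /dvdnP [b ->] Hga Hgb Hne.
have Ha : (1 < a)%N by nia.
have Hb : (1 < b)%N by nia.
have Hab : a != b by apply: contraNneq Hne => ->.
have Hlt : (a + b < a * b)%N by nia.
rewrite /invn !natrM.
have HA : (a%:R : rat) != 0 by rewrite pnatr_eq0; case: a Ha {Hga Hne Hab Hlt}.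
have HB : (b%:R : rat) != 0 by rewrite pnatr_eq0; case: b Hb {Hgb Hne Hab Hlt}.
have HG : (g%:R : rat) != 0 by rewrite pnatr_eq0; case: g Hg {Hga Hgb Hne}.
have -> : (a%:R * g%:R)^-1 + (b%:R * g%:R)^-1 = (a%:R + b%:R) / (a%:R * b%:R) * (g%:R : rat)^-1.
  by field; rewrite HA HB HG.
rewrite gtr_pMl ?invr_gt0 ?ltr0n // ltr_pdivrMr ?mul1r -?natrD -?natrM ?ltr_nat //.
rewrite ?ltr0n; nia.
Qed.

Lemma step y C : (0 < y)%N -> goodC y C -> (1 < size C)%N ->
  exists c c0 C', [/\ goodC y C', size C = (size C').+1, c0 \in C' &
     [/\ c \in C, c0 \in C, c0 != c &
     Q invn y C = Q invn y C' - invn c + invn (gcdn c c0)]].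
Proof.
move=> Hy HC Hsz; have [c [c0 [Hc Hc0 Hne Hmax]]] := pick Hy HC Hsz.
have [s1 [s2 E]] := mem_split Hc.
have Hp : perm_eq C (c :: s1 ++ s2).
  by rewrite E; apply/permPl; exact: (perm_catCA s1 [:: c] s2).
case: (HC) => HU H1 H2 H3.
have := HU; rewrite (perm_uniq Hp) /= => /andP [HcN HU'].
have Hsub : {subset s1 ++ s2 <= C}.
  by move=> z Hz; rewrite (perm_mem Hp) inE Hz orbT.
have Hc0' : c0 \in s1 ++ s2.
  by move: Hc0; rewrite (perm_mem Hp) inE (negbTE Hne).
exists c, c0, (s1 ++ s2); split.
- exact: goodC_sub HU' Hsub HC.
- by rewrite E !size_cat /= addnS.
- exact: Hc0'.
split => //.
rewrite E Q_move QE (gcdn_idPr (H1 c Hc).2).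
rewrite -(@Q_map _ c c (s1 ++ s2)) //.
have Hg : gcdn c c0 \in map (gcdn c) (s1 ++ s2) by apply: map_f.
have [t1 [t2 Et]] := mem_split Hg.
rewrite Et Q_move Q_dom; last first.
  apply/allP => r Hr.
  have : r \in map (gcdn c) (s1 ++ s2) by rewrite Et mem_cat inE; rewrite mem_cat in Hr; case/orP: Hr => ->; rewrite ?orbT.
  case/mapP => c1 Hc1 ->; apply: Hmax; first exact: Hsub.
  by apply: contraNneq HcN => <-.
rewrite QE QE0 (gcdn_idPr (dvdn_gcdl c c0)) /=.
rewrite QE0; ring.
Qed.


Lemma gfacts y C c c0 : goodC y C -> c \in C -> c0 \in C -> c0 != c ->
  [/\ (0 < gcdn c c0)%N, (gcdn c c0 < c)%N, (gcdn c c0 < c0)%N & (c0 %| y)%N].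
Proof.
move=> [HU H1 H2 H3] Hc Hc0 Hne.
have [c_pos c_dy] := H1 c Hc; have [c0_pos c0_dy] := H1 c0 Hc0.
split => //; first by rewrite gcdn_gt0 c_pos.
- rewrite ltn_neqAle dvdn_leq ?dvdn_gcdl // andbT; apply/negP => /eqP E.
  by move: Hne; rewrite (H2 c c0 Hc Hc0) ?eqxx // -E dvdn_gcdr.
- rewrite ltn_neqAle dvdn_leq ?dvdn_gcdr // andbT; apply/negP => /eqP E.
  by move: Hne; rewrite (H2 c0 c Hc0 Hc) ?eqxx // -E dvdn_gcdl.
Qed.

Lemma main n : forall y C, size C = n.+2 -> (0 < y)%N -> goodC y C -> invn y < Q invn y C.
Proof.
elim: n => [|n IH] y C Hs Hy HC;
  have [c [c0 [C' [HC' Hsz Hc0' [Hc Hc0 Hne HQ]]]]] := step Hy HC (ltac:(by rewrite Hs));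
  rewrite HQ; have [g_pos g_lt_c g_lt_c0 c0_dy] := gfacts HC Hc Hc0 Hne.
- move: Hsz Hc0'; rewrite Hs; case: C' HC' HQ => [|d [|? ?]] //= HC' HQ _; rewrite inE => /eqP Ed.
  rewrite -Ed QE !QE0 (gcdn_idPr c0_dy).
  have := @ineq2 (gcdn c c0) c c0 g_pos (dvdn_gcdl _ _) (dvdn_gcdr _ _) g_lt_c g_lt_c0.
  rewrite eq_sym Hne => /(_ isT) H; lra.
- have := IH y C' (ltac:(by move: Hsz; rewrite Hs => -[]))  Hy HC'.
  have := finv_lt g_pos g_lt_c; lra.
Qed.

Local Close Scope ring_scope.

Lemma mu_fuel S y : all (fun x => 0 < x) S -> forall z k1 k2, 0 < z -> z < k1 -> z < k2 ->
  mu_rec S k1 y z = mu_rec S k2 y z.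
Proof.
move=> Hpos z; elim/ltn_ind: z => z IH k1 k2 Hz.
case: k1 => [//|k1]; case: k2 => [//|k2] Hk1 Hk2 /=.
case: eqP => // _; case: ifP => // _; congr (- _)%R.
rewrite big_seq_cond [RHS]big_seq_cond; apply: eq_bigr => w /andP [Hw /andP [/andP [Hyw Hwz] Hwnz]].
have Hw0 : 0 < w by move/allP: Hpos => /(_ w); rewrite -mem_undup => /(_ Hw).
have Hwlt : w < z by rewrite ltn_neqAle Hwnz dvdn_leq.
by apply: IH => //; apply: leq_trans Hwlt _.
Qed.

Lemma mob_rec S y z : all (fun x => 0 < x) S -> 0 < z ->
  mobius S y z = if y == z then 1%R else if y %| z then
     (- \sum_(w <- undup S | (y %| w)%N && (w %| z)%N && (w != z)) mobius S y w)%R else 0%R.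
Proof.
move=> Hpos Hz; rewrite /mobius /=.
case: eqP => // _; case: ifP => // _; congr (- _)%R.
rewrite big_seq_cond [RHS]big_seq_cond; apply: eq_bigr => w /andP [Hw /andP [/andP [Hyw Hwz] Hwnz]].
have Hw0 : 0 < w by move/allP: Hpos => /(_ w); rewrite -mem_undup => /(_ Hw).
have Hwlt : w < z by rewrite ltn_neqAle Hwnz dvdn_leq.
by rewrite /mobius (mu_fuel y Hpos Hw0 Hwlt (ltnSn w)).
Qed.

Local Open Scope ring_scope.

Lemma sum_pick (r : seq nat) (j : nat) (F : nat -> rat) : uniq r -> j \in r ->
  \sum_(i <- r) F i * (i == j)%:R = F j.
Proof.
move=> Hu Hj; rewrite (bigD1_seq j) //= eqxx mulr1 big1 ?addr0 //.
by move=> i /negbTE ->; rewrite mulr0.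
Qed.

Lemma mob_L S y x : all (fun x => 0 < x)%N S -> y \in S -> x \in S ->
  \sum_(z <- undup S) (((y %| z) && (z %| x))%N%:R * (mobius S y z)%:~R) = (y == x)%:R :> rat.
Proof.
move=> Hpos Hy Hx.
have pos : forall w, w \in undup S -> (0 < w)%N.
  by move=> w; rewrite mem_undup => Hw; move/allP: Hpos => /(_ w Hw).
have Hx' : x \in undup S by rewrite mem_undup.
have Hy' : y \in undup S by rewrite mem_undup.
case: (eqVneq y x) => [<-|Hne].
  rewrite (bigD1_seq y) ?undup_uniq //= dvdnn /= /mobius /= eqxx mul1r big1 ?addr0 //.
  move=> z Hz; case: (boolP ((y %| z) && (z %| y))%N) => [H|]; last by rewrite mul0r.
  by move: Hz; rewrite eq_sym eqn_dvd H.
case: (boolP (y %| x)%N) => Hyx; last first.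
  rewrite big1 // => z _; case: (boolP ((y %| z) && (z %| x))%N) => [/andP [H1 H2]|]; last by rewrite mul0r.
  by move: Hyx; rewrite (dvdn_trans H1 H2).
rewrite (bigD1_seq x) ?undup_uniq //= Hyx dvdnn mul1r.
rewrite (mob_rec y Hpos (pos x Hx')) (negbTE Hne) Hyx rmorphN rmorph_sum /=.
rewrite big_mkcondl /=.
rewrite (_ : \sum_(i <- undup S | i != x) (((y %| i) && (i %| x))%N%:R * (mobius S y i)%:~R) =
  \sum_(i <- undup S | i != x) (if ((y %| i) && (i %| x))%N then (mobius S y i)%:~R else 0)).
  by rewrite addNr.
apply: eq_bigr => i _.
by case: ((y %| i) && (i %| x))%N; rewrite ?mul1r ?mul0r.
Qed.

Local Close Scope ring_scope.

Lemma covsetP S x c : c \in covset S x ->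
  [/\ c \in S, c %| x, c != x & ~~ has (fun z => [&& c %| z, z %| x, z != c & z != x]) S].
Proof.
rewrite mem_filter => /andP [/and5P [H1 H2 H3 H4 H5] _]; split => //.
Qed.

Lemma key S x z : all (fun x => 0 < x) S -> x \in S -> z \in S ->
  ((z %| x) && all (fun c => ~~ (z %| c)) (covset S x)) = (z == x).
Proof.
move=> Hpos Hx Hz.
have pos : forall w, w \in S -> 0 < w by move=> w Hw; move/allP: Hpos => /(_ w Hw).
case: (eqVneq z x) => [->|Hne].
  rewrite dvdnn /=; apply/allP => c /covsetP [Hc Hcx Hcne _].
  by apply/negP => Hxc; move: Hcne; rewrite eqn_dvd Hcx Hxc.
apply/negbTE/negP => /andP [Hzx Hall].
pose P := fun n => [&& n \in S, z %| n, n %| x & n != x].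
have exP : exists n, P n by exists z; rewrite /P Hz Hzx Hne dvdnn.
have ubP : forall n, P n -> n <= x by move=> n /and4P [_ _ Hn _]; apply: dvdn_leq (pos x Hx) Hn.
case: (ex_maxnP exP ubP) => m /and4P [HmS Hzm Hmx Hmne] Hmax.
have Hmc : m \in covset S x.
  rewrite mem_filter mem_undup HmS andbT /covered_by HmS Hx Hmx Hmne /=.
  apply/hasP => -[u Hu /and4P [Hmu Hux Hunm Hunx]].
  have : u <= m by apply: Hmax; rewrite /P Hu (dvdn_trans Hzm Hmu) Hux Hunx.
  have := dvdn_leq (pos u Hu) Hmu => H1 H2.
  by move: Hunm; rewrite eqn_leq H1 H2.
by move/allP: Hall => /(_ m Hmc); rewrite Hzm.
Qed.

Local Open Scope ring_scope.

Lemma Psi_Q S x : all (fun x => 0 < x)%N S -> gcd_closed S -> x \in S ->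
  Psi_inv S x = Q invn x (covset S x).
Proof.
move=> Hpos Hcl Hx.
set s := undup S.
have Hus : uniq s by apply: undup_uniq.
have Hx' : x \in s by rewrite mem_undup.
pose P' := fun g : nat => \sum_(d <- s) invn d *
   \sum_(z <- s) (((d %| z)%N%:R * (mobius S d z)%:~R) * (z %| g)%N%:R).
have E1 : Q invn x (covset S x) = Q P' x (covset S x).
  apply: (@Q_ext s) => //.
  - move=> g Hg; rewrite /P'; symmetry.
    transitivity (\sum_(d <- s) invn d * (d == g)%:R); last by rewrite sum_pick.
    apply: eq_big_seq => d Hd; congr (_ * _).
    have HdS : d \in S by rewrite -mem_undup.
    have HgS : g \in S by rewrite -mem_undup.
    rewrite -(@mob_L S d g Hpos HdS HgS).
    apply: eq_bigr => z _.
    by case: (d %| z)%N; case: (z %| g)%N; rewrite /= ?mul1r ?mulr1 ?mul0r ?mulr0.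
  - by move=> a b; rewrite !mem_undup; apply: Hcl.
  - by apply/allP => c; rewrite mem_filter => /andP [].
rewrite E1 /P' Q_sum /Psi_inv big_mkcond /=.
apply: eq_big_seq => d Hd.
rewrite Q_scale Q_sum.
rewrite (eq_big_seq (fun z => ((d %| z)%N%:R * (mobius S d z)%:~R) * (z == x)%:R)); last first.
  move=> z Hz; have HzS : z \in S by rewrite -mem_undup.
  by rewrite Q_scale Q_ind key.
rewrite sum_pick // /invn.
by case: (d %| x)%N; rewrite ?mul1r ?mul0r ?mulr0 // mulrC.
Qed.

Local Close Scope ring_scope.

Lemma anti S x a b : a \in covset S x -> b \in covset S x -> a %| b -> a = b.
Proof.
move=> /covsetP [HaS Hax Hane Hna] /covsetP [HbS Hbx Hbne _] Hab.
apply/eqP; apply/negPn/negP => Hne.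
move/hasP: Hna; apply; exists b => //.
by rewrite Hab Hbx eq_sym Hne Hbne.
Qed.

Lemma goodC_cov S x : all (fun x => 0 < x) S -> double_chain_gen S x -> goodC x (covset S x).
Proof.
move=> Hpos [A [B [HAB Hdis HchA HchB]]].
have pos : forall c, c \in covset S x -> 0 < c /\ c %| x.
  move=> c /covsetP [HcS Hcx _ _]; split => //; by move/allP: Hpos => /(_ c HcS).
have inAB : forall a b, a \in covset S x -> b \in covset S x -> a != b ->
    (gcdn a b \in A) || (gcdn a b \in B).
  move=> a b Ha Hb Hne.
  have [H _] := HAB (gcdn a b).
  case: H => [|HA|HB]; last 2 first.
  - by rewrite HA.
  - by rewrite HB orbT.
  split.
  - exists [:: a; b]; split => //; first by rewrite /= Ha Hb.
    by rewrite big_cons big_cons big_nil gcdn0.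
  - apply/negP => Hg.
    have E : gcdn a b = a by apply: anti Hg Ha (dvdn_gcdl _ _).
    move: Hne; rewrite (anti Ha Hb) ?eqxx //; rewrite -E; exact: dvdn_gcdr.
split => //.
- by rewrite filter_uniq // undup_uniq.
- by move=> a b; apply: anti.
- move=> a b c d e f Ha Hb Hc Hd He Hf H1 H2 H3.
  have := inAB a b Ha Hb H1; have := inAB c d Hc Hd H2; have := inAB e f He Hf H3.
  rewrite /dvcomp.
  case/orP => Z3; case/orP => Z2; case/orP => Z1;
  first [ by rewrite (HchA _ _ Z1 Z2) ?orbT | by rewrite (HchA _ _ Z1 Z3) ?orbT
        | by rewrite (HchA _ _ Z2 Z3) ?orbT | by rewrite (HchB _ _ Z1 Z2) ?orbT
        | by rewrite (HchB _ _ Z1 Z3) ?orbT | by rewrite (HchB _ _ Z2 Z3) ?orbT ].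
Qed.

Unset Implicit Arguments.

Theorem theorem4p2 (S : seq nat) (xi : nat) :
  all (fun x => 0 < x) S -> gcd_closed S -> xi \in S ->
  double_chain_gen S xi -> Psi_inv S xi <> 0%R.
Proof.
move=> Hpos Hcl Hx Hdc.
rewrite Psi_Q //.
have Hx0 : (0 < xi)%N by move/allP: Hpos => /(_ xi Hx).
have HC := goodC_cov Hpos Hdc.
case E: (covset S xi) => [|c [|c' C']].
- by rewrite QE0; apply/eqP; rewrite lt0r_neq0 // finv_gt0.
- have [[Hc0 Hcx] _] : ((0 < c)%N /\ (c %| xi)%N) /\ True.
    by split => //; case: HC => _ H1 _ _; apply: H1; rewrite E inE.
  have Hcne : c != xi.
    by have := (@covsetP S xi c); rewrite E inE eqxx => /(_ isT) [].
  have Hlt : (c < xi)%N by rewrite ltn_neqAle Hcne dvdn_leq.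
  rewrite QE !QE0 (gcdn_idPr Hcx).
  have := finv_lt Hc0 Hlt => H; apply/eqP; rewrite subr_eq0; apply/eqP => H'.
  by move: H; rewrite H' ltxx.
- have := @main (size C') xi (c :: c' :: C') erefl Hx0; rewrite -E => /(_ HC) H.
  have := finv_gt0 Hx0 => H0; apply/eqP; rewrite gt_eqF //; exact: lt_trans H0 H.
Qed.
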